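(* Let $G=(m,n,\boldsymbol{c},\boldsymbol{d},r_{\max},r_{\min})$ be an interbank lending game and let $\boldsymbol{s}^*$ be its pure Nash equilibrium. Then the interest rates offered by the borrowers at $\boldsymbol{s}^*$ are identical: $r_j(\boldsymbol{s}^* )=r_{j'}(\boldsymbol{s}^* )$ for all $j,j'\in B$.
   Context: An interbank lending game $G=(m,n,\boldsymbol{c},\boldsymbol{d},r_{\max},r_{\min})$ consists of positive integers $m,n$, budgets $\boldsymbol{c}\in\mathbb{R}_{>0}^m$, demands $\boldsymbol{d}\in\mathbb{R}_{>0}^n$ and reals $0<r_{\min}<r_{\max}$. The players are the lenders $L=\{1,\dots,m\}$; $B=\{1,\dots,n\}$ is the set of borrowers. Lender $i$'s strategy set is $S_i=\{s_i\in\mathbb{R}_{\ge0}^n:\sum_{j\in B}s_{ij}\le c_i\}$, the strategy space is $\boldsymbol{S}=\prod_{i\in L}S_i$ with elements $\boldsymbol{s}=(s_{ij})$. The interest rate of borrower $j$ is $r_j(\boldsymbol{s})=(r_{\min}-r_{\max})\frac{\sum_{i\in L}s_{ij}}{d_j}+r_{\max}$ and lender $i$'s utility is $u_i(\boldsymbol{s})=\sum_{j\in B}(r_j(\boldsymbol{s})-r_{\min})s_{ij}$. A pure Nash equilibrium is $\boldsymbol{s}^*\in\boldsymbol{S}$ with $u_i(\boldsymbol{s}^* )\ge u_i(s_i,\boldsymbol{s}^*_{-i})$ for all $i\in L$, $s_i\in S_i$ (such a game has exactly one pure Nash equilibrium). *)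

(* Defs.v *)
From mathcomp Require Import all_boot all_order all_algebra.
From mathcomp Require Import reals.
Set Implicit Arguments. Unset Strict Implicit. Unset Printing Implicit Defensive.
Import Order.TTheory GRing.Theory Num.Theory.
Local Open Scope ring_scope.

(* Lenders are 'I_m, borrowers are 'I_n; a strategy profile is
   s : 'I_m -> 'I_n -> R, with s i j the amount lender i lends to borrower j. *)

Section Game.
Variables (R : realType) (m n : nat).

Definition rate (d : 'I_n -> R) (rmax rmin : R) (s : 'I_m -> 'I_n -> R)
  (j : 'I_n) : R :=
  (rmin - rmax) * ((\sum_(i < m) s i j) / d j) + rmax.

Definition utility (d : 'I_n -> R) (rmax rmin : R) (s : 'I_m -> 'I_n -> R)
  (i : 'I_m) : R :=
  \sum_(j < n) (rate d rmax rmin s j - rmin) * s i j.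

Definition in_strategy_set (c : 'I_m -> R) (i : 'I_m) (si : 'I_n -> R) : Prop :=
  (forall j, 0 <= si j) /\ \sum_(j < n) si j <= c i.

Definition in_strategy_space (c : 'I_m -> R) (s : 'I_m -> 'I_n -> R) : Prop :=
  forall i, in_strategy_set c i (s i).

Definition deviate (s : 'I_m -> 'I_n -> R) (i : 'I_m) (si : 'I_n -> R)
  : 'I_m -> 'I_n -> R :=
  fun k => if k == i then si else s k.

Definition is_pure_NE (c : 'I_m -> R) (d : 'I_n -> R) (rmax rmin : R)
  (s : 'I_m -> 'I_n -> R) : Prop :=
  in_strategy_space c s /\
  forall (i : 'I_m) (si : 'I_n -> R), in_strategy_set c i si ->
    utility d rmax rmin (deviate s i si) i <= utility d rmax rmin s i.

End Game.

(* Main.v *)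
Require Import Defs.
From mathcomp Require Import all_boot all_order all_algebra.
From mathcomp Require Import reals.
From mathcomp Require Import ring lra.
Import Order.TTheory GRing.Theory Num.Theory.
Local Open Scope ring_scope.
Set Implicit Arguments.

Lemma small_le0 (R : realType) (Y K b : R) : 0 < b -> 0 <= K ->
  (forall e, 0 < e -> e <= b -> Y <= e * K) -> Y <= 0.
Proof.
move=> hb hK H; rewrite leNgt; apply/negP => hY.
set e := Num.min b (Y / (K + 1)).
have hK1 : 0 < K + 1 by lra.
have he : 0 < e by rewrite lt_min hb divr_gt0.
have he1 : e <= Y / (K + 1) by rewrite ge_min lexx orbT.
have := H e he; rewrite ge_min lexx => /(_ isT) h.
have : e * K <= Y / (K + 1) * K by rewrite ler_wpM2r.
have : Y / (K + 1) * K < Y.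
  by rewrite mulrAC ltr_pdivrMr //; nra.
lra.
Qed.

Lemma colsum_dev (R : realType) (m n : nat) (s : 'I_m -> 'I_n -> R) i si l :
  \sum_(i' < m) deviate s i si i' l = \sum_(i' < m) s i' l - s i l + si l.
Proof.
rewrite (bigD1 i) //= [\sum_(i' < m) s i' l](bigD1 i) //= /deviate eqxx.
rewrite (eq_bigr (fun i' => s i' l)); last by move=> i' /negbTE ->.
ring.
Qed.

Lemma transfer (R : realType) (m n : nat)
  (c : 'I_m -> R) (d : 'I_n -> R) (rmax rmin : R)
  (hd : forall j, 0 < d j) (hr : rmin < rmax)
  (s : 'I_m -> 'I_n -> R) (hNE : is_pure_NE c d rmax rmin s)
  i j k (hjk : j != k) e (he : 0 < e) (hek : e <= s i k) :
  (\sum_(i' < m) s i' k) / d k - (\sum_(i' < m) s i' j) / d j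
   + s i k / d k - s i j / d j <= e * ((d j)^-1 + (d k)^-1).
Proof.
case: hNE => hS hN.
pose s' := fun l => s i l + (if l == j then e else 0) - (if l == k then e else 0).
have hs' : in_strategy_set c i s'.
  have [h0 h1] := hS i.
  split.
    move=> l; have := h0 l; rewrite /s'.
    case: (l =P j) => [elj|_]; case: (l =P k) => [elk|_].
    - by move: hjk; rewrite -elj -elk eqxx.
    - by lra.
    - by rewrite elk; lra.
    - by lra.
  rewrite /s' sumrB big_split /= -!big_mkcond /= !big_pred1_eq.
  by rewrite addrK.
have := hN i s' hs'.
rewrite /utility -subr_le0 -sumrB /deviate eqxx.
rewrite (bigD1 j) //= (bigD1 k) /=; last by rewrite eq_sym hjk.
rewrite big1 ?addr0; last first.
  move=> l /andP [hlj hlk].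
  rewrite /rate colsum_dev /s' (negbTE hlj) (negbTE hlk) /deviate.
  have -> : \sum_(i' < m) s i' l = \sum_(i' < m) (if i' == i then s i else s i') l.
    by apply: eq_bigr => i' _; case: eqP => [->|].
  ring.
have Ej : forall l, \sum_(i' < m) (if i' == i then s' else s i') l = \sum_(i' < m) s i' l - s i l + s' l.
  move=> l; exact: colsum_dev.
rewrite /rate Ej Ej.
rewrite /s' eqxx (negbTE hjk) eq_sym (negbTE hjk) eqxx.
set Sj := \sum_(i' < m) s i' j; set Sk := \sum_(i' < m) s i' k.
move=> H.
have hyp : (rmax - rmin) * e * ((Sk / d k - Sj / d j + s i k / d k - s i j / d j) - e * ((d j)^-1 + (d k)^-1)) <= 0.
  apply: (le_trans _ H); rewrite le_eqVlt; apply/orP; left; apply/eqP.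
  ring.
have ha : 0 < (rmax - rmin) * e by apply: mulr_gt0; lra.
rewrite pmulr_rle0 // in hyp; lra.
Qed.

Theorem theorem3p5 (R : realType) (m n : nat)
  (c : 'I_m -> R) (d : 'I_n -> R) (rmax rmin : R)
  (hm : (0 < m)%N) (hn : (0 < n)%N)
  (hc : forall i, 0 < c i) (hd : forall j, 0 < d j)
  (hrmin : 0 < rmin) (hr : rmin < rmax)
  (s : 'I_m -> 'I_n -> R) (hNE : is_pure_NE c d rmax rmin s) :
  forall j j' : 'I_n, rate d rmax rmin s j = rate d rmax rmin s j'.
Proof.
have h0 : forall i l, 0 <= s i l by move=> i l; have [H _] := hNE.1 i; exact: H.
suff key : forall j k, ~ (rate d rmax rmin s k < rate d rmax rmin s j).
  move=> j j'; apply/eqP; rewrite eq_le !leNgt; apply/andP; split; apply/negP; exact: key.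
move=> j k hlt.
have hjk : j != k by apply/eqP => ejk; move: hlt; rewrite ejk ltxx.
move: hlt; rewrite /rate.
set Sj := \sum_(i' < m) s i' j; set Sk := \sum_(i' < m) s i' k.
move=> hlt.
have hq : Sj / d j < Sk / d k by nra.
have hSj : 0 <= Sj / d j by apply: divr_ge0; [apply: sumr_ge0 => i _; exact: h0 | exact: ltW].
have [i0 hi0] : exists i0, 0 < s i0 k.
  have : [exists i0, 0 < s i0 k].
    apply: contraT => /existsPn hn0.
    have : Sk <= 0 by apply: sumr_le0 => i _; rewrite leNgt; exact: hn0.
    move=> hSk; have : Sk / d k <= 0 by rewrite pmulr_lle0 // invr_gt0.
    lra.
  by case/existsP => i0 ?; exists i0.
have hY : forall i, 0 < s i k -> s i k / d k + (Sk / d k - Sj / d j) <= s i j / d j.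
  move=> i hi.
  have := @small_le0 R (Sk / d k - Sj / d j + s i k / d k - s i j / d j)
    ((d j)^-1 + (d k)^-1) (s i k) hi.
  have hK : 0 <= (d j)^-1 + (d k)^-1 by apply: addr_ge0; rewrite invr_ge0 ltW.
  move=> /(_ hK) H.
  have : Sk / d k - Sj / d j + s i k / d k - s i j / d j <= 0.
    apply: H => e he hek; have := transfer hd hr hNE i j k hjk e he hek; rewrite -/Sj -/Sk; exact.
  lra.
have hle : forall i, s i k / d k <= s i j / d j.
  move=> i; have := h0 i k; rewrite le_eqVlt => /orP [/eqP <-|hi].
    by rewrite mul0r; apply: divr_ge0 => //; exact: ltW.
  have := hY i hi; lra.
have : \sum_(i < m) s i k / d k < \sum_(i < m) s i j / d j.
  rewrite (bigD1 i0) //= [X in _ < X](bigD1 i0) //=.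
  apply: ltr_leD; first by have := hY i0 hi0; lra.
  by apply: ler_sum => i _; exact: hle.
rewrite -!mulr_suml -/Sj -/Sk.
lra.
Qed.
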